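(* Let $p(z)=c_0z^{\deg(p)}+\cdots$ be a non-constant polynomial with leading coefficient $c_0\neq0$, and let $0<\gamma<1$. Then for all $r>0$, $$\int_0^{2\pi}\frac{d\theta}{|p(re^{i\theta})|^{\gamma/\deg(p)}}\le \frac{2\pi}{(1-\gamma)|c_0|^{\gamma/\deg(p)}}\cdot\frac{1}{r^{\gamma}}.$$ *)

(* Defs.v *)
From Stdlib Require Import Reals.
Open Scope R_scope.

Definition Cx : Type := (R * R)%type.
Definition C0 : Cx := (0, 0).
Definition C1 : Cx := (1, 0).
Definition Cadd (z w : Cx) : Cx := (fst z + fst w, snd z + snd w).
Definition Cmul (z w : Cx) : Cx :=
  (fst z * fst w - snd z * snd w, fst z * snd w + snd z * fst w).
Fixpoint Cpow (z : Cx) (n : nat) : Cx :=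
  match n with O => C1 | S n => Cmul z (Cpow z n) end.
Definition Cnorm (z : Cx) : R := sqrt (fst z ^ 2 + snd z ^ 2).

Definition polar (r theta : R) : Cx := (r * cos theta, r * sin theta).

Fixpoint peval (a : nat -> Cx) (d : nat) (z : Cx) : Cx :=
  match d with
  | O => Cmul (a O) (Cpow z O)
  | S n => Cadd (peval a n z) (Cmul (a (S n)) (Cpow z (S n)))
  end.

(* Truncation at level M of theta |-> 1 / |p(r e^{i theta})|^{gamma/d};
   the value is +infinity at zeros of p, hence truncated to M there. *)
Definition trunc_integrand (a : nat -> Cx) (d : nat) (gamma r M theta : R) : R :=
  let v := Cnorm (peval a d (polar r theta)) in
  if Req_EM_T v 0 then M else Rmin (/ Rpower v (gamma / INR d)) M.

(* Main.v *)
Require Import Defs.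
From Coquelicot Require Import Coquelicot.
From Stdlib Require Import Reals Lra Psatz List Classical.
Open Scope R_scope.

Definition G (eps g t : R) : R := Rpower (Rmax eps (Rabs (sin t))) (- g).

Lemma Rmax_alt a b : Rmax a b = (a + b + Rabs (a - b)) / 2.
Proof. unfold Rmax; destruct (Rle_dec a b); [rewrite Rabs_left1 by lra|rewrite Rabs_right by lra]; lra. Qed.

Lemma cont_m eps t : continuous (fun t => Rmax eps (Rabs (sin t))) t.
Proof.
apply continuity_pt_filterlim.
apply continuity_pt_ext with (fun t => (eps + Rabs (sin t) + Rabs (eps - Rabs (sin t))) / 2).
- intro x. rewrite Rmax_alt. reflexivity.
- assert (Hs : continuity_pt (fun t => Rabs (sin t)) t).
  { apply (continuity_pt_comp sin Rabs). apply continuity_sin. apply Rcontinuity_abs. }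
  unfold Rdiv. apply continuity_pt_mult; [|apply continuity_pt_const; intros ? ?; reflexivity].
  apply continuity_pt_plus; [apply continuity_pt_plus|].
  + apply continuity_pt_const; intros ? ?; reflexivity.
  + exact Hs.
  + apply (continuity_pt_comp (fun t => eps - Rabs (sin t)) Rabs); [|apply Rcontinuity_abs].
    apply continuity_pt_minus; [apply continuity_pt_const; intros ? ?; reflexivity|exact Hs].
Qed.

Lemma cont_G eps g t : 0 < eps -> continuous (G eps g) t.
Proof.
intro He. unfold G, Rpower.
apply (continuous_comp (fun t => -g * ln (Rmax eps (Rabs (sin t)))) exp); [|apply continuous_exp].
apply continuous_ext with (fun t => mult (-g) (ln (Rmax eps (Rabs (sin t))))); [reflexivity|].
apply (@continuous_mult _ R_AbsRing); [apply continuous_const|].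
apply (continuous_comp (fun t => Rmax eps (Rabs (sin t))) ln); [apply cont_m|].
apply continuous_ln. apply Rlt_le_trans with eps; [lra|apply Rmax_l].
Qed.

Lemma jordan u : 0 <= u <= PI/2 -> 2/PI * u <= sin u.
Proof.
intros [H0 H1]. assert (HP := PI_RGT_0).
destruct (Req_dec u 0) as [->|Hu0]. { rewrite sin_0. lra. }
destruct (Req_dec u (PI/2)) as [->|Hu1]. { rewrite sin_PI2. field_simplify; lra. }
assert (Hd : forall x, is_derive sin x (cos x)).
{ intro x. apply is_derive_Reals. apply derivable_pt_lim_sin. }
destruct (MVT_gen sin 0 u cos) as [c1 [Hc1 E1]].
{ intros; apply Hd. } { intros; apply continuity_sin. }
destruct (MVT_gen sin u (PI/2) cos) as [c2 [Hc2 E2]].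
{ intros; apply Hd. } { intros; apply continuity_sin. }
rewrite Rmin_left in Hc1 by lra. rewrite Rmax_right in Hc1 by lra.
rewrite Rmin_left in Hc2 by lra. rewrite Rmax_right in Hc2 by lra.
rewrite sin_0 in E1. rewrite sin_PI2 in E2.
assert (Hc : cos c2 <= cos c1).
{ destruct (Req_dec c1 c2) as [->|Hne]; [lra|].
  left. apply cos_decreasing_1; lra. }
assert (K : 0 <= (cos c1 - cos c2) * u * (PI/2 - u)).
{ apply Rmult_le_pos; [apply Rmult_le_pos|]; lra. }
assert (K2 : sin u * (PI/2) - u = (cos c1 - cos c2) * u * (PI/2 - u)) by nra.
apply Rmult_le_reg_l with (PI/2); [lra|].
replace (PI/2 * (2/PI*u)) with u by (field; lra). lra.
Qed.

Lemma int_pow d a g : 0 < d <= a -> 0 < g < 1 ->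
  RInt (fun u => Rpower u (- g)) d a = (Rpower a (1 - g) - Rpower d (1 - g)) / (1 - g).
Proof.
intros Hd Hg.
apply is_RInt_unique.
replace ((Rpower a (1 - g) - Rpower d (1 - g)) / (1 - g)) with
  (minus ((fun u => Rpower u (1-g) / (1-g)) a) ((fun u => Rpower u (1-g) / (1-g)) d))
  by (unfold minus, plus, opp; simpl; field; lra).
apply (is_RInt_derive (fun u => Rpower u (1-g) / (1-g))).
- intros x Hx. rewrite Rmin_left in Hx by lra. rewrite Rmax_right in Hx by lra.
  apply is_derive_Reals.
  replace (Rpower x (-g)) with (/(1-g) * ((1-g) * Rpower x (1 - g - 1))).
  2:{ replace (1 - g - 1) with (-g) by ring. field. lra. }
  apply (derivable_pt_lim_ext (fun u => /(1-g) * Rpower u (1-g))).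
  { intro; unfold Rdiv; ring. }
  apply derivable_pt_lim_scal. apply derivable_pt_lim_power. lra.
- intros x Hx. rewrite Rmin_left in Hx by lra. rewrite Rmax_right in Hx by lra.
  apply (@ex_derive_continuous R_AbsRing R_NormedModule (fun u => Rpower u (-g))). exists ((-g) * Rpower x (-g - 1)).
  apply is_derive_Reals. apply derivable_pt_lim_power. lra.
Qed.

Lemma ex_RInt_cont (g : R -> R) x y : (forall z, Rmin x y <= z <= Rmax x y -> continuous g z) -> ex_RInt g x y.
Proof. intro H. apply (@ex_RInt_continuous R_CompleteNormedModule). exact H. Qed.

Lemma lemA (g : R -> R) a c S gm : 0 < a -> 0 < gm < 1 -> 0 <= c ->
  (forall t, continuous g t) ->
  (forall u, 0 <= u <= a -> 0 <= g u <= S) ->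
  (forall u, 0 < u <= a -> g u <= c * Rpower u (- gm)) ->
  RInt g 0 a <= c * Rpower a (1 - gm) / (1 - gm).
Proof.
intros Ha Hg Hc Hcont HS Hb.
assert (Hex : forall x y, ex_RInt g x y) by (intros; apply ex_RInt_cont; intros; apply Hcont).
assert (HS0 : 0 <= S) by (destruct (HS 0); lra).
apply Rnot_lt_le. intro Hlt.
set (eta := RInt g 0 a - c * Rpower a (1 - gm) / (1 - gm)).
assert (He : 0 < eta) by (unfold eta; lra).
set (dl := Rmin (a/2) (eta / (2 * (S + 1)))).
assert (Hdl : 0 < dl) by (apply Rmin_pos; [lra| apply Rdiv_lt_0_compat; lra]).
assert (Hdla : dl <= a) by (unfold dl; apply Rle_trans with (a/2); [apply Rmin_l|lra]).
assert (E : RInt g 0 a = RInt g 0 dl + RInt g dl a).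
{ rewrite <- (RInt_Chasles g 0 dl a) by apply Hex. reflexivity. }
assert (B1 : RInt g 0 dl <= S * dl).
{ apply Rle_trans with (RInt (fun _ => S) 0 dl).
  - apply RInt_le; [lra|apply Hex|apply ex_RInt_const|].
    intros x Hx. apply HS. lra.
  - rewrite RInt_const. unfold scal; simpl; unfold mult; simpl. lra. }
assert (B2 : RInt g dl a <= c * ((Rpower a (1 - gm) - Rpower dl (1 - gm)) / (1 - gm))).
{ rewrite <- int_pow by lra.
  rewrite <- (RInt_scal (fun u => Rpower u (-gm))).
  2:{ apply ex_RInt_cont. intros z Hz. rewrite Rmin_left in Hz by lra.
      rewrite Rmax_right in Hz by lra.
      apply (@ex_derive_continuous R_AbsRing R_NormedModule (fun u => Rpower u (-gm))).
      exists ((-gm) * Rpower z (-gm - 1)).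
      apply is_derive_Reals. apply derivable_pt_lim_power. lra. }
  apply RInt_le; [lra|apply Hex| |].
  - apply ex_RInt_cont. intros z Hz. rewrite Rmin_left in Hz by lra.
    rewrite Rmax_right in Hz by lra.
    apply (@ex_derive_continuous R_AbsRing R_NormedModule (fun u => scal c (Rpower u (-gm)))).
    exists (c * ((-gm) * Rpower z (-gm - 1))).
    apply is_derive_Reals. apply derivable_pt_lim_scal. apply derivable_pt_lim_power. lra.
  - intros x Hx. apply Hb. lra. }
assert (Hpd : 0 < Rpower dl (1 - gm)) by (unfold Rpower; apply exp_pos).
assert (B3 : S * dl < eta).
{ apply Rle_lt_trans with (S * (eta / (2 * (S + 1)))).
  - apply Rmult_le_compat_l; [lra|apply Rmin_r].
  - apply Rmult_lt_reg_r with (2 * (S+1)); [lra|].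
    field_simplify; try lra. nra. }
assert (B4 : c * ((Rpower a (1 - gm) - Rpower dl (1 - gm)) / (1 - gm)) <= c * Rpower a (1 - gm) / (1 - gm)).
{ unfold Rdiv. rewrite Rmult_assoc. apply Rmult_le_compat_l; [lra|].
  apply Rmult_le_compat_r; [apply Rlt_le, Rinv_0_lt_compat; lra|lra]. }
unfold eta in *. lra.
Qed.

Lemma shift_int (H : R -> R) v a b : (forall t, continuous H t) ->
  RInt (fun y => H (y + v)) a b = RInt H (a + v) (b + v).
Proof.
intro Hc. 
assert (E := RInt_comp_lin H 1 v a b).
rewrite !Rmult_1_l in E. rewrite <- E.
- apply RInt_ext. intros. unfold scal; simpl; unfold mult; simpl. rewrite Rmult_1_l, Rmult_1_l. reflexivity.
- apply ex_RInt_cont; intros; apply Hc.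
Qed.

Lemma per (H : R -> R) c : (forall t, continuous H t) -> (forall t, H (t + PI) = H t) ->
  RInt H c (c + 2 * PI) = 2 * RInt H 0 PI.
Proof.
intros Hc Hp.
assert (Hex : forall x y, ex_RInt H x y) by (intros; apply ex_RInt_cont; intros; apply Hc).
assert (K : forall c, RInt H c (c + PI) = RInt H 0 PI).
{ intro c0.
  assert (S1 : RInt H PI (c0 + PI) = RInt H 0 c0).
  { rewrite <- (Rplus_0_l PI) at 1. rewrite <- shift_int by exact Hc.
    apply RInt_ext. intros; apply Hp. }
  assert (C1 := RInt_Chasles H c0 PI (c0 + PI) (Hex _ _) (Hex _ _)).
  assert (C2 := RInt_Chasles H 0 c0 PI (Hex _ _) (Hex _ _)).
  unfold plus in C1, C2; simpl in C1, C2. lra. }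
assert (C := RInt_Chasles H c (c + PI) (c + 2 * PI) (Hex _ _) (Hex _ _)).
unfold plus in C; simpl in C.
rewrite <- C, K. assert (E2 : c + 2 * PI = (c + PI) + PI) by lra. rewrite E2, K. symmetry. apply double.
Qed.

Lemma Rpower_pos x y : 0 < Rpower x y.
Proof. unfold Rpower; apply exp_pos. Qed.

Lemma Rpower_one_base y : Rpower 1 y = 1.
Proof. unfold Rpower; rewrite ln_1, Rmult_0_r; apply exp_0. Qed.

Lemma G_half e g : 0 < e -> RInt (G e g) 0 PI = 2 * RInt (G e g) 0 (PI/2).
Proof.
intro He.
assert (Hc : forall t, continuous (G e g) t) by (intro; apply cont_G; exact He).
assert (Hex : forall x y, ex_RInt (G e g) x y) by (intros; apply ex_RInt_cont; intros; apply Hc).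
assert (E := RInt_comp_lin (G e g) (-1) PI (PI/2) PI (Hex _ _)).
assert (E1 : RInt (fun y => scal (-1) (G e g (-1 * y + PI))) (PI/2) PI = - RInt (G e g) (PI/2) PI).
{ rewrite <- (RInt_opp (G e g)) by apply Hex. apply RInt_ext. intros x _.
  unfold scal, opp; simpl; unfold mult; simpl.
  unfold G. replace (-1 * x + PI) with (PI - x) by ring. rewrite sin_PI_x. ring. }
assert (E2 : - RInt (G e g) (PI/2) PI = RInt (G e g) (-1*(PI/2)+PI) (-1*PI+PI)).
{ rewrite <- E1. exact E. } clear E E1. rename E2 into E.
replace (-1 * (PI/2) + PI) with (PI/2) in E by field.
replace (-1 * PI + PI) with 0 in E by ring.
rewrite <- (opp_RInt_swap (G e g) 0 (PI/2)) in E by apply Hex. unfold opp in E; simpl in E.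
assert (E' : RInt (G e g) (PI / 2) PI = RInt (G e g) 0 (PI / 2)).
{ rewrite <- (Ropp_involutive (RInt (G e g) (PI / 2) PI)), E. apply Ropp_involutive. }
assert (C := RInt_Chasles (G e g) 0 (PI/2) PI (Hex _ _) (Hex _ _)).
unfold plus in C; simpl in C.
rewrite <- C, E'. symmetry. apply double.
Qed.

Lemma G_le_S e g t : 0 < e -> 0 < g -> 0 <= G e g t <= Rpower e (- g).
Proof.
intros He Hg. split; [apply Rlt_le, Rpower_pos|].
unfold G. rewrite !Rpower_Ropp. apply Rinv_le_contravar; [apply Rpower_pos|].
apply Rle_Rpower_l; [lra|]. split; [lra|apply Rmax_l].
Qed.

Lemma G_quarter e g : 0 < e -> 0 < g < 1 -> RInt (G e g) 0 (PI/2) <= (PI/2) / (1 - g).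
Proof.
intros He Hg. assert (HP := PI_RGT_0).
assert (Hc : forall t, continuous (G e g) t) by (intro; apply cont_G; exact He).
replace ((PI/2) / (1 - g)) with (Rpower (PI/2) g * Rpower (PI/2) (1 - g) / (1 - g)).
2:{ rewrite <- Rpower_plus. replace (g + (1 - g)) with 1 by ring. rewrite Rpower_1 by lra. reflexivity. }
apply (lemA (G e g) (PI/2) (Rpower (PI/2) g) (Rpower e (-g))); try lra.
- apply Rlt_le, Rpower_pos.
- exact Hc.
- intros u _. apply G_le_S; lra.
- intros u Hu.
  assert (J := jordan u ltac:(lra)).
  assert (Hpos : 0 < 2/PI*u) by (apply Rmult_lt_0_compat; [apply Rdiv_lt_0_compat|]; lra).
  unfold G. rewrite !Rpower_Ropp.
  apply Rle_trans with (/ Rpower (2/PI*u) g).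
  + apply Rinv_le_contravar; [apply Rpower_pos|].
    apply Rle_Rpower_l; [lra|]. split; [exact Hpos|].
    apply Rle_trans with (sin u); [exact J|]. apply Rle_trans with (Rabs (sin u)); [apply Rle_abs|apply Rmax_r].
  + rewrite <- Rpower_mult_distr by (try apply Rdiv_lt_0_compat; lra).
    assert (K : Rpower (2/PI) g * Rpower (PI/2) g = 1).
    { rewrite Rpower_mult_distr by (apply Rdiv_lt_0_compat; lra).
      replace (2/PI * (PI/2)) with 1 by (field; lra). apply Rpower_one_base. }
    assert (P1 := Rpower_pos (2/PI) g). assert (P2 := Rpower_pos u g).
    right. field_simplify_eq; [|split; lra].
    rewrite <- K. ring.
Qed.

Lemma G_full e g : 0 < e -> 0 < g < 1 -> forall c,
  RInt (G e g) c (c + 2 * PI) <= 2 * PI / (1 - g).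
Proof.
intros He Hg c.
rewrite per.
- rewrite G_half by exact He. assert (Q := G_quarter e g He Hg).
  apply Rle_trans with (2 * (2 * ((PI/2)/(1-g)))).
  + apply Rmult_le_compat_l; [lra|]. apply Rmult_le_compat_l; lra.
  + right. field. lra.
- intro; apply cont_G; exact He.
- intro t. unfold G. rewrite neg_sin, Rabs_Ropp. reflexivity.
Qed.

Definition Csub (z w : Cx) : Cx := (fst z - fst w, snd z - snd w).

Lemma dir u v : 0 < u^2 + v^2 -> exists phi,
  cos phi = u / sqrt (u^2 + v^2) /\ sin phi = v / sqrt (u^2 + v^2).
Proof.
intro Hp. set (rho := sqrt (u^2+v^2)).
assert (Hr : 0 < rho) by (apply sqrt_lt_R0; exact Hp).
assert (Hr2 : rho * rho = u^2 + v^2) by (apply sqrt_sqrt; lra).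
assert (Hx : -1 <= u / rho <= 1).
{ assert (Hu : u^2 <= rho^2) by nra.
  split; apply Rmult_le_reg_r with rho; try lra; unfold Rdiv; rewrite Rmult_assoc, Rinv_l by lra; nra. }
assert (Hs : sqrt (1 - (u/rho)²) = Rabs v / rho).
{ rewrite <- (sqrt_Rsqr (Rabs v / rho)).
  2:{ unfold Rdiv; apply Rmult_le_pos; [apply Rabs_pos|apply Rlt_le, Rinv_0_lt_compat; lra]. }
  f_equal. unfold Rsqr. replace (Rabs v / rho * (Rabs v / rho)) with ((Rabs v * Rabs v) / (rho*rho)) by (field; lra).
  rewrite <- Rabs_mult, Rabs_right by nra. rewrite Hr2. field_simplify_eq; [|lra]. nra. }
destruct (Rle_dec 0 v) as [Hv|Hv].
- exists (acos (u/rho)). split; [apply cos_acos; exact Hx|].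
  rewrite sin_acos by exact Hx. rewrite Hs, Rabs_right by lra. reflexivity.
- exists (- acos (u/rho)). split.
  + rewrite cos_neg. apply cos_acos; exact Hx.
  + rewrite sin_neg, sin_acos by exact Hx. rewrite Hs, Rabs_left by lra. field. lra.
Qed.

Lemma geom r (w : Cx) : 0 < r -> exists phi, forall th,
  r * Rabs (sin (th - phi)) <= Cnorm (Csub (polar r th) w).
Proof.
intro Hr. destruct w as [u v].
unfold Cnorm, Csub, polar; simpl.
destruct (Req_dec (u^2 + v^2) 0) as [H0|H0].
- assert (u = 0) by nra. assert (v = 0) by nra. subst.
  exists 0. intro th. rewrite Rminus_0_r.
  rewrite <- (sqrt_pow2 (r * Rabs (sin th))) by (apply Rmult_le_pos; [lra|apply Rabs_pos]).
  apply sqrt_le_1_alt.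

  assert (E : (r * Rabs (sin th))^2 = r^2 * (sin th)^2).
  { rewrite Rpow_mult_distr, pow2_abs. reflexivity. }
  rewrite E. assert (K := sin2_cos2 th). unfold Rsqr in K. nra.
- assert (Hp : 0 < u^2 + v^2) by nra.
  destruct (dir u v Hp) as [phi [Hc Hs]].
  exists phi. intro th.
  set (rho := sqrt (u^2+v^2)) in *.
  assert (Hr0 : 0 < rho) by (apply sqrt_lt_R0; exact Hp).
  assert (Hr2 : rho * rho = u^2 + v^2) by (apply sqrt_sqrt; lra).
  rewrite sin_minus, Hc, Hs.
  rewrite <- (sqrt_pow2 (r * Rabs _)) by (apply Rmult_le_pos; [lra|apply Rabs_pos]).
  apply sqrt_le_1_alt.
  rewrite Rpow_mult_distr, pow2_abs.
  set (s := sin th). set (c := cos th).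
  replace (s * (u / rho) - c * (v / rho)) with ((s * u - c * v) / rho) by (field; lra).
  assert (CS : (r * (s*u - c*v))^2 <= ((r*c - u)^2 + (r*s - v)^2) * (u^2+v^2)).
  { replace (r*(s*u - c*v)) with ((r*s - v)*u - (r*c - u)*v) by ring.
    set (A := r*s - v). set (B := r*c - u).
    assert (Q : (B^2 + A^2) * (u^2+v^2) - (A*u - B*v)^2 = (A*v + B*u)^2) by ring.
    assert (0 <= (A*v + B*u)^2) by (apply pow2_ge_0). lra. }
  apply Rmult_le_reg_r with (rho * rho); [nra|].
  replace (r^2 * ((s*u - c*v)/rho)^2 * (rho*rho)) with ((r * (s*u - c*v))^2) by (field; lra).
  rewrite Hr2. replace (r * c + - u) with (r*c - u) by ring.
  replace (r * s + - v) with (r*s - v) by ring. exact CS.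
Qed.

Section L.
Context {T : Type}.
Definition prodl (f : T -> R) (l : list T) := fold_right Rmult 1 (map f l).
Definition suml (f : T -> R) (l : list T) := fold_right Rplus 0 (map f l).

Lemma suml_lin f a b l : suml (fun p => a + b * f p) l = INR (length l) * a + b * suml f l.
Proof. induction l as [|x l IH]; unfold suml in *; cbn [map fold_right length]; [simpl; ring|]. rewrite IH, S_INR. ring. Qed.

Lemma suml_le f g l : (forall p, In p l -> f p <= g p) -> suml f l <= suml g l.
Proof. induction l as [|x l IH]; intro H; unfold suml in *; simpl; [lra|].
apply Rplus_le_compat; [apply H; left; reflexivity|apply IH; intros; apply H; right; assumption]. Qed.

Lemma suml_nonneg f l : (forall q, In q l -> 0 <= f q) -> 0 <= suml f l.
Proof. induction l as [|x l IH]; intro H; unfold suml in *; simpl; [lra|].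
apply Rplus_le_le_0_compat; [apply H; left; reflexivity|apply IH; intros; apply H; right; assumption]. Qed.

Lemma suml_ge_elt f l p : (forall q, In q l -> 0 <= f q) -> In p l -> f p <= suml f l.
Proof. induction l as [|x l IH]; intros H Hp; [destruct Hp|].
assert (H1 : 0 <= suml f l) by (apply suml_nonneg; intros; apply H; right; assumption).
assert (H2 : 0 <= f x) by (apply H; left; reflexivity).
unfold suml in *; simpl.
destruct Hp as [->|Hp]; [lra|].
assert (f p <= fold_right Rplus 0 (map f l)) by (apply IH; [intros; apply H; right|]; assumption). lra.
Qed.

Lemma prodl_pos f l : (forall p, In p l -> 0 < f p) -> 0 < prodl f l.
Proof. induction l as [|x l IH]; intro H; unfold prodl in *; simpl; [lra|].
apply Rmult_lt_0_compat; [apply H; left; reflexivity|apply IH; intros; apply H; right; assumption]. Qed.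

Lemma ln_prodl f l : (forall p, In p l -> 0 < f p) -> ln (prodl f l) = suml (fun p => ln (f p)) l.
Proof. induction l as [|x l IH]; intro H; unfold prodl, suml in *; simpl; [apply ln_1|].
rewrite ln_mult; [rewrite IH; [reflexivity|]|apply H; left; reflexivity|].
- intros; apply H; right; assumption.
- change (0 < prodl f l). apply prodl_pos. intros; apply H; right; assumption.
Qed.

Lemma amgm f l : (forall p, In p l -> 0 < f p) -> (1 <= length l)%nat ->
  exp (/ INR (length l) * suml (fun p => ln (f p)) l) <= / INR (length l) * suml f l.
Proof.
intros H Hn. set (n := INR (length l)).
assert (Hn0 : 1 <= n) by (unfold n; apply (le_INR 1); exact Hn).
assert (HA : 0 < / n * suml f l).
{ apply Rmult_lt_0_compat; [apply Rinv_0_lt_compat; lra|].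
  destruct l as [|x l']; [simpl in Hn; lia|].
  apply Rlt_le_trans with (f x); [apply H; left; reflexivity|].
  apply suml_ge_elt; [intros; apply Rlt_le, H; assumption|left; reflexivity]. }
set (A := / n * suml f l) in *.
rewrite <- (exp_ln A) by exact HA. destruct (Req_dec (/ n * suml (fun p => ln (f p)) l) (ln A)) as [Heq|Hne]; [rewrite Heq; lra|].
apply Rlt_le, exp_increasing.
cut (/ n * suml (fun p => ln (f p)) l <= ln A); [lra|].
assert (Hp : forall p, In p l -> ln (f p) <= ln A + / A * f p - 1).
{ intros p Hp. assert (Hf := H p Hp).
  assert (E := exp_ineq1_le (ln (f p / A))).
  rewrite exp_ln in E by (apply Rdiv_lt_0_compat; lra).
  unfold Rdiv in E. rewrite ln_mult, ln_Rinv in E by (try apply Rinv_0_lt_compat; lra). lra. }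
apply suml_le in Hp.
replace (suml (fun p => ln A + / A * f p - 1) l) with (suml (fun p => (ln A - 1) + / A * f p) l) in Hp.
2:{ unfold suml; f_equal; apply map_ext; intro; ring. }
rewrite suml_lin in Hp. fold n in Hp.
replace (/ A * suml f l) with n in Hp.
2:{ unfold A. field. split; [lra|]. intro E. unfold A in HA. rewrite E, Rmult_0_r in HA. lra. }
apply Rmult_le_reg_l with n; [lra|]. rewrite <- Rmult_assoc, Rinv_r, Rmult_1_l by lra. lra.
Qed.
End L.

Definition Gprop (r : R) (p : Cx * R) :=
  forall th, r * Rabs (sin (th - snd p)) <= Cnorm (Csub (polar r th) (fst p)).

Lemma pointwise (a : nat -> Cx) (d : nat) (gm r M eps : R) (l : list (Cx * R)) th :
  (1 <= d)%nat -> 0 < gm < 1 -> 0 < r -> 0 < eps -> 0 < Cnorm (a d) ->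
  length l = d -> (forall p, In p l -> Gprop r p) ->
  (forall z, Cnorm (peval a d z) = Cnorm (a d) * prodl (fun p => Cnorm (Csub z (fst p))) l) ->
  M <= (/ Rpower (Cnorm (a d)) (gm / INR d) * / INR d * / Rpower r gm) * Rpower eps (- gm) ->
  trunc_integrand a d gm r M th <=
    (/ Rpower (Cnorm (a d)) (gm / INR d) * / INR d * / Rpower r gm) *
    suml (fun p => G eps gm (th - snd p)) l.
Proof.
intros Hd Hg Hr He HC Hl Hgeo Hfac HM.
set (K := / Rpower (Cnorm (a d)) (gm / INR d) * / INR d * / Rpower r gm) in *.
assert (HdR : 1 <= INR d) by (apply (le_INR 1); exact Hd).
assert (HK : 0 < K).
{ unfold K. repeat apply Rmult_lt_0_compat; apply Rinv_0_lt_compat; try apply Rpower_pos; lra. }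
assert (HfM : trunc_integrand a d gm r M th <= M).
{ unfold trunc_integrand. destruct (Req_EM_T _ 0); [lra|apply Rmin_r]. }
assert (HG0 : forall q, In q l -> 0 <= G eps gm (th - snd q)).
{ intros; apply Rlt_le, Rpower_pos. }
destruct (classic (exists p, In p l /\ Rabs (sin (th - snd p)) < eps)) as [[p [Hp Hs]]|Hno].
- apply Rle_trans with M; [exact HfM|].
  apply Rle_trans with (K * Rpower eps (- gm)); [exact HM|].
  apply Rmult_le_compat_l; [lra|].
  replace (Rpower eps (- gm)) with (G eps gm (th - snd p)).
  2:{ unfold G. rewrite Rmax_left by lra. reflexivity. }
  apply (suml_ge_elt (fun q => G eps gm (th - snd q))); assumption.
- assert (Hall : forall p, In p l -> eps <= Rabs (sin (th - snd p))).
  { intros p Hp. apply Rnot_lt_le. intro Hlt. apply Hno. exists p. split; assumption. }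
  set (z := polar r th).
  set (x := fun p : Cx * R => Cnorm (Csub z (fst p))).
  assert (Hx : forall p, In p l -> r * Rabs (sin (th - snd p)) <= x p) by (intros; apply Hgeo; assumption).
  assert (Hxpos : forall p, In p l -> 0 < x p).
  { intros p Hp. apply Rlt_le_trans with (r * Rabs (sin (th - snd p))); [|apply Hx; exact Hp].
    apply Rmult_lt_0_compat; [lra|]. apply Rlt_le_trans with eps; [lra|apply Hall; exact Hp]. }
  assert (Hv : Cnorm (peval a d z) = Cnorm (a d) * prodl x l) by apply Hfac.
  assert (Hvpos : 0 < Cnorm (peval a d z)) by (rewrite Hv; apply Rmult_lt_0_compat; [lra|apply prodl_pos; exact Hxpos]).
  assert (Hf : trunc_integrand a d gm r M th <= / Rpower (Cnorm (peval a d z)) (gm / INR d)).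
  { unfold trunc_integrand. fold z. destruct (Req_EM_T _ 0); [lra|apply Rmin_l]. }
  apply Rle_trans with (1 := Hf).
  set (y := fun p => Rpower (x p) (- gm)).
  assert (Hypos : forall p, In p l -> 0 < y p) by (intros; apply Rpower_pos).
  assert (E1 : / Rpower (Cnorm (peval a d z)) (gm / INR d) =
     / Rpower (Cnorm (a d)) (gm / INR d) * exp (/ INR (length l) * suml (fun p => ln (y p)) l)).
  { rewrite Hv, <- Rpower_mult_distr by (try apply prodl_pos; assumption).
    rewrite Rinv_mult. f_equal.
    rewrite <- Rpower_Ropp. unfold Rpower at 1. f_equal.
    rewrite ln_prodl by exact Hxpos. rewrite Hl.
    replace (suml (fun p => ln (y p)) l) with (suml (fun p => 0 + (-gm) * ln (x p)) l).
    2:{ unfold suml; f_equal; apply map_ext; intro q. unfold y, Rpower. rewrite ln_exp. ring. }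
    rewrite suml_lin. unfold Rdiv. ring. }
  rewrite E1, Hl.
  assert (AG := amgm y l Hypos ltac:(rewrite Hl; exact Hd)).
  rewrite Hl in AG.
  apply Rle_trans with (/ Rpower (Cnorm (a d)) (gm / INR d) * (/ INR d * suml y l)).
  { apply Rmult_le_compat_l; [apply Rlt_le, Rinv_0_lt_compat, Rpower_pos|exact AG]. }
  assert (Hyle : forall p, In p l -> y p <= / Rpower r gm * G eps gm (th - snd p)).
  { intros p Hp. unfold y, G. rewrite Rmax_right by (apply Hall; exact Hp).
    rewrite !Rpower_Ropp. rewrite <- Rinv_mult.
    apply Rinv_le_contravar.
    - apply Rmult_lt_0_compat; apply Rpower_pos.
    - rewrite Rpower_mult_distr; [|lra|apply Rlt_le_trans with eps; [lra|apply Hall; exact Hp]].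
      apply Rle_Rpower_l; [lra|]. split; [|apply Hx; exact Hp].
      apply Rmult_lt_0_compat; [lra|]. apply Rlt_le_trans with eps; [lra|apply Hall; exact Hp]. }
  apply suml_le in Hyle.
  replace (suml (fun p => / Rpower r gm * G eps gm (th - snd p)) l)
    with (suml (fun p => 0 + / Rpower r gm * G eps gm (th - snd p)) l) in Hyle.
  2:{ unfold suml; f_equal; apply map_ext; intro; ring. }
  rewrite (suml_lin (fun p => G eps gm (th - snd p))) in Hyle.
  unfold K. 
  assert (0 < / Rpower (Cnorm (a d)) (gm / INR d)) by (apply Rinv_0_lt_compat, Rpower_pos).
  assert (0 < / INR d) by (apply Rinv_0_lt_compat; lra).
  apply Rle_trans with (/ Rpower (Cnorm (a d)) (gm / INR d) * (/ INR d * (INR (length l) * 0 +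
     / Rpower r gm * suml (fun p => G eps gm (th - snd p)) l))).
  + apply Rmult_le_compat_l; [lra|]. apply Rmult_le_compat_l; [lra|exact Hyle].
  + right. ring.
Qed.

Lemma cont_Gs eps gm c t : 0 < eps -> continuous (fun th => G eps gm (th - c)) t.
Proof.
intro He. apply continuity_pt_filterlim.
apply (continuity_pt_comp (fun th => th - c) (G eps gm)).
- apply continuity_pt_minus; [apply continuity_pt_id|apply continuity_pt_const; intros ? ?; reflexivity].
- apply continuity_pt_filterlim. apply cont_G; exact He.
Qed.

Lemma sum_int eps gm (l : list (Cx * R)) : 0 < eps -> 0 < gm < 1 ->
  (forall t, continuous (fun th => suml (fun p => G eps gm (th - snd p)) l) t) /\
  RInt (fun th => suml (fun p => G eps gm (th - snd p)) l) 0 (2 * PI) <= INR (length l) * (2 * PI / (1 - gm)).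
Proof.
intros He Hg. induction l as [|p l [IHc IHi]].
- split.
  + intro t. apply continuous_ext with (fun _ => 0); [intro; reflexivity|apply continuous_const].
  + unfold suml; simpl. rewrite RInt_const. unfold scal; simpl; unfold mult; simpl. right. ring.
- split.
  + intro t. apply continuity_pt_filterlim.
    apply continuity_pt_ext with (fun th => G eps gm (th - snd p) + suml (fun p => G eps gm (th - snd p)) l).
    { intro; reflexivity. }
    apply continuity_pt_plus; apply continuity_pt_filterlim; [apply cont_Gs; exact He|apply IHc].
  + assert (Ex1 : ex_RInt (fun th => G eps gm (th - snd p)) 0 (2*PI)).
    { apply ex_RInt_cont; intros; apply cont_Gs; exact He. }
    assert (Ex2 : ex_RInt (fun th => suml (fun p => G eps gm (th - snd p)) l) 0 (2*PI)).
    { apply ex_RInt_cont; intros; apply IHc. }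
    assert (E := RInt_plus _ _ 0 (2*PI) Ex1 Ex2).
    assert (E' : RInt (fun th => suml (fun p0 => G eps gm (th - snd p0)) (p :: l)) 0 (2*PI) =
       RInt (fun th => G eps gm (th - snd p)) 0 (2*PI) + RInt (fun th => suml (fun p => G eps gm (th - snd p)) l) 0 (2*PI)).
    { exact E. }
    rewrite E'.
    assert (S1 : RInt (fun th => G eps gm (th - snd p)) 0 (2*PI) <= 2 * PI / (1 - gm)).
    { assert (Es : RInt (fun th => G eps gm (th - snd p)) 0 (2*PI) = RInt (G eps gm) (0 + - snd p) (2*PI + - snd p)).
      { rewrite <- shift_int by (intro; apply cont_G; exact He). apply RInt_ext. intros; reflexivity. }
      rewrite Es. replace (2*PI + - snd p) with ((0 + - snd p) + 2 * PI) by ring.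
      apply G_full; assumption. }
    cbn [length]. rewrite S_INR. 
    assert (IHi' : RInt (fun th => suml (fun p => G eps gm (th - snd p)) l) 0 (2 * PI) <= INR (length l) * (2 * PI / (1 - gm))) by exact IHi.
    lra.
Qed.

Lemma build_l r (zs : list Cx) : 0 < r -> exists l : list (Cx * R),
  map fst l = zs /\ forall p, In p l -> Gprop r p.
Proof.
intro Hr. induction zs as [|w zs [l [Hl Hp]]].
- exists nil. split; [reflexivity|intros p []].
- destruct (geom r w Hr) as [phi Hphi].
  exists ((w, phi) :: l). split; [simpl; rewrite Hl; reflexivity|].
  intros p [<-|Hin]; [exact Hphi|apply Hp; exact Hin].
Qed.

Lemma main_from_factor (a : nat -> Cx) (d : nat) (gamma r : R)
  (hd : (1 <= d)%nat) (hlead : a d <> C0)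
  (hg0 : 0 < gamma) (hg1 : gamma < 1) (hr : 0 < r) :
  (exists zs : list Cx, length zs = d /\ forall z,
    Cnorm (peval a d z) = Cnorm (a d) * fold_right Rmult 1 (map (fun w => Cnorm (Csub z w)) zs)) ->
  forall (M : R)
    (pr : Riemann_integrable (trunc_integrand a d gamma r M) 0 (2 * PI)),
    RiemannInt pr <=
      2 * PI / ((1 - gamma) * Rpower (Cnorm (a d)) (gamma / INR d))
      * / Rpower r gamma.
Proof.
intros [zs [Hzs Hfac]] M pr.
assert (HP := PI_RGT_0).
assert (HC : 0 < Cnorm (a d)).
{ unfold Cnorm. destruct (a d) as [u v] eqn:Ead. simpl. apply sqrt_lt_R0.
  destruct (Req_dec u 0); destruct (Req_dec v 0); try nra.
  subst. exfalso. apply hlead. reflexivity. }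
destruct (build_l r zs hr) as [l [Hl Hgeo]].
assert (Hlen : length l = d) by (rewrite <- Hzs, <- Hl, map_length; reflexivity).
assert (Hfac' : forall z, Cnorm (peval a d z) = Cnorm (a d) * prodl (fun p => Cnorm (Csub z (fst p))) l).
{ intro z. rewrite Hfac, <- Hl, map_map. reflexivity. }
assert (HdR : 1 <= INR d) by (apply (le_INR 1); exact hd).
set (K := / Rpower (Cnorm (a d)) (gamma / INR d) * / INR d * / Rpower r gamma).
assert (HK : 0 < K).
{ unfold K. repeat apply Rmult_lt_0_compat; apply Rinv_0_lt_compat; try apply Rpower_pos; lra. }
set (eps := Rpower (Rmax 1 (M / K)) (- / gamma)).
assert (He : 0 < eps) by apply Rpower_pos.
assert (HM : M <= K * Rpower eps (- gamma)).
{ unfold eps. rewrite Rpower_mult.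
  replace (- / gamma * - gamma) with 1 by (field; lra).
  rewrite Rpower_1 by (apply Rlt_le_trans with 1; [lra|apply Rmax_l]).
  apply Rle_trans with (K * (M / K)); [right; field; lra|].
  apply Rmult_le_compat_l; [lra|apply Rmax_r]. }
destruct (sum_int eps gamma l He (conj hg0 hg1)) as [Hc Hi].
rewrite <- RInt_Reals.
apply Rle_trans with (RInt (fun th => scal K (suml (fun p => G eps gamma (th - snd p)) l)) 0 (2 * PI)).
- apply RInt_le.
  + lra.
  + apply ex_RInt_Reals_1. exact pr.
  + apply ex_RInt_cont. intros z _.
    apply continuity_pt_filterlim. apply continuity_pt_mult; [apply continuity_pt_const; intros ? ?; reflexivity|].
    apply continuity_pt_filterlim. apply Hc.
  + intros x _. apply (pointwise a d gamma r M eps l x hd (conj hg0 hg1) hr He HC Hlen Hgeo Hfac' HM).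
- rewrite (@RInt_scal R_CompleteNormedModule (fun th => suml (fun p => G eps gamma (th - snd p)) l)) by (apply ex_RInt_cont; intros; apply Hc).
  unfold scal; simpl; unfold mult; simpl.
  rewrite Hlen in Hi.
  apply Rle_trans with (K * (INR d * (2 * PI / (1 - gamma)))).
  + apply Rmult_le_compat_l; [lra|exact Hi].
  + right. unfold K. field. repeat split; try lra.
    * apply Rgt_not_eq, Rpower_pos.
    * apply Rgt_not_eq, Rpower_pos.
Qed.

Module FTA.
From mathcomp Require Import all_boot all_algebra.
From mathcomp Require Import Rstruct complex.
Import GRing.Theory.

Definition toC (z : Cx) : complex R := Complex (fst z) (snd z).
Definition ofC (c : complex R) : Cx := (Re c, Im c).
Lemma toC_add z w : toC (Cadd z w) = (toC z + toC w)%R.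
Proof. reflexivity. Qed.
Lemma toC_mul z w : toC (Cmul z w) = (toC z * toC w)%R.
Proof. reflexivity. Qed.
Lemma toC_pow z n : toC (Cpow z n) = (toC z ^+ n)%R.
Proof. elim: n => [|n IH] //=. by rewrite toC_mul IH exprS. Qed.


Definition nC (c : complex R) : R := sqrt (Re c ^ 2 + Im c ^ 2).

Lemma nC_mul x y : nC (x * y)%R = nC x * nC y.
Proof.
case: x => a b; case: y => c e; rewrite /nC /=.
rewrite -sqrt_mult; try nra.
f_equal. change ((a*c - b*e)^2 + (a*e + b*c)^2 = (a^2+b^2)*(c^2+e^2)). ring.
Qed.

Lemma peval_toC a n z :
  toC (peval a n z) = (\sum_(i < n.+1) toC (a i) * toC z ^+ i)%R.
Proof.
elim: n => [|n IH]; first by rewrite big_ord_recr big_ord0 /= add0r toC_mul.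
rewrite big_ord_recr /= toC_add IH toC_mul. by rewrite -toC_pow.
Qed.

Lemma factor (a : nat -> Cx) d : a d <> C0 ->
  exists zs : list Cx, length zs = d /\ forall z,
   Cnorm (peval a d z) = Cnorm (a d) * fold_right Rmult 1 (map (fun w => Cnorm (Csub z w)) zs).
Proof.
move=> had.
pose P : {poly complex R} := (\poly_(i < d.+1) toC (a i))%R.
have hlc : lead_coef P = toC (a d).
  rewrite lead_coef_poly //. case: (a d) had => x y h. apply/eqP => E.
  apply h. case: E => -> ->. reflexivity.
have [rs Hrs] := closed_field_poly_normal P.
have hnz : toC (a d) != 0%R.
  apply/eqP => E; apply had. move: E; case: (a d) => x y [] -> ->. reflexivity.
have hsz : size rs = d.
  have h1 : size P = d.+1 by rewrite size_poly_eq.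
  have : size P = size (lead_coef P *: \prod_(z <- rs) ('X - z%:P))%R by rewrite -Hrs.
  by rewrite size_scale ?hlc // size_prod_XsubC h1 => -[].
exists (map ofC rs); split; first by rewrite map_length -hsz.
move=> z.
have HE : toC (peval a d z) = (toC (a d) * \prod_(r <- rs) (toC z - r))%R.
  have -> : toC (peval a d z) = P.[toC z]%R by rewrite peval_toC /P horner_poly.
  rewrite {1}Hrs hornerZ hlc horner_prod.
  congr (_ * _)%R. apply: eq_bigr => r _. by rewrite hornerXsubC.
have -> : Cnorm (peval a d z) = nC (toC (peval a d z)) by [].
rewrite HE nC_mul. congr (_ * _).
clear.
elim: rs => [|r rs IH].
  rewrite big_nil /nC /=. change (sqrt (1*(1*1)+0*(0*1)) = 1).
  replace (1*(1*1)+0*(0*1)) with 1 by ring. exact sqrt_1.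
rewrite big_cons nC_mul IH /=. congr (_ * _). by case: r.
Qed.

End FTA.

Theorem lemma5 (a : nat -> Cx) (d : nat) (gamma r : R)
  (hd : (1 <= d)%nat) (hlead : a d <> C0)
  (hg0 : 0 < gamma) (hg1 : gamma < 1) (hr : 0 < r) :
  forall (M : R)
    (pr : Riemann_integrable (trunc_integrand a d gamma r M) 0 (2 * PI)),
    RiemannInt pr <=
      2 * PI / ((1 - gamma) * Rpower (Cnorm (a d)) (gamma / INR d))
      * / Rpower r gamma.
Proof.
  exact (main_from_factor a d gamma r hd hlead hg0 hg1 hr (FTA.factor a d hlead)).
Qed.
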